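(* Let $p,q\in\mathbb R^3$ with $|p|\ge\frac32q^0$. Then for any multi-index $\beta\in\mathbb N^3\setminus\{0\}$ (derivatives $\partial_\beta$ in $p$), $$|\partial_\beta g|\lesssim\langle q\rangle^{|\beta|},\qquad \Big|\partial_\beta\Big(\frac1g\Big)\Big|\lesssim\frac{\langle q\rangle^{|\beta|}}{g^2},$$ and $$|\partial_\beta\sqrt{\mathfrak s}|\lesssim\langle q\rangle^{|\beta|},\qquad \Big|\partial_\beta\Big(\frac1{\sqrt{\mathfrak s}}\Big)\Big|\lesssim\frac{\langle q\rangle^{|\beta|}}{g^2}.$$
   Context: $\mathfrak c\ge1$ is the speed of light; $p^0=\sqrt{\mathfrak c^2+|p|^2}$, $q^0=\sqrt{\mathfrak c^2+|q|^2}$, $\langle q\rangle=\sqrt{1+|q|^2}$; $\mathfrak s=2(p^0q^0-p\cdot q+\mathfrak c^2)$, $g=\sqrt{2(p^0q^0-p\cdot q-\mathfrak c^2)}$. Implicit constants are independent of $\mathfrak c$, $p$, $q$. *)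

(* Defs.v *)
From Stdlib Require Import Reals.
From Coquelicot Require Import Coquelicot.
Open Scope R_scope.

Definition dot3 (a1 a2 a3 b1 b2 b3 : R) : R := a1 * b1 + a2 * b2 + a3 * b3.
Definition sq3 (a1 a2 a3 : R) : R := a1 ^ 2 + a2 ^ 2 + a3 ^ 2.
Definition norm3 (a1 a2 a3 : R) : R := sqrt (sq3 a1 a2 a3).

(* p^0 = sqrt(c^2 + |p|^2) *)
Definition energy (c a1 a2 a3 : R) : R := sqrt (c ^ 2 + sq3 a1 a2 a3).
Definition japan (a1 a2 a3 : R) : R := sqrt (1 + sq3 a1 a2 a3).

Definition mand_s (c p1 p2 p3 q1 q2 q3 : R) : R :=
  2 * (energy c p1 p2 p3 * energy c q1 q2 q3 - dot3 p1 p2 p3 q1 q2 q3 + c ^ 2).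
Definition rel_g (c p1 p2 p3 q1 q2 q3 : R) : R :=
  sqrt (2 * (energy c p1 p2 p3 * energy c q1 q2 q3 - dot3 p1 p2 p3 q1 q2 q3 - c ^ 2)).

Fixpoint iterD (n : nat) (f : R -> R) : R -> R :=
  match n with
  | O => f
  | S m => Derive (iterD m f)
  end.

Definition dmulti (b1 b2 b3 : nat) (F : R -> R -> R -> R) (x1 x2 x3 : R) : R :=
  iterD b1 (fun y1 =>
    iterD b2 (fun y2 =>
      iterD b3 (fun y3 => F y1 y2 y3) x3) x2) x1.

(* Main.v *)
Require Import Defs.
From Stdlib Require Import Reals.
From Coquelicot Require Import Coquelicot.
From Stdlib Require Import Lra Lia Psatz List ZArith.
Open Scope R_scope.

Definition Xg (c x1 x2 x3 q1 q2 q3 : R) : R :=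
  2 * (energy c x1 x2 x3 * energy c q1 q2 q3 - dot3 x1 x2 x3 q1 q2 q3 - c ^ 2).

Lemma energy_pos c x1 x2 x3 : 1 <= c -> 0 < energy c x1 x2 x3.
Proof. intros; unfold energy, sq3; apply sqrt_lt_R0; nra. Qed.

Lemma energy_sq c x1 x2 x3 : energy c x1 x2 x3 ^ 2 = c^2 + sq3 x1 x2 x3.
Proof. unfold energy, sq3. rewrite pow2_sqrt; auto. nra. Qed.

Lemma dot_abs c x1 x2 x3 q1 q2 q3 :
  Rabs (dot3 x1 x2 x3 q1 q2 q3) <= energy c x1 x2 x3 * energy c q1 q2 q3.
Proof.
  pose proof (energy_sq c x1 x2 x3) as E1. pose proof (energy_sq c q1 q2 q3) as E2.
  assert (0 <= energy c x1 x2 x3) by (unfold energy; apply sqrt_pos).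
  assert (0 <= energy c q1 q2 q3) by (unfold energy; apply sqrt_pos).
  rewrite <- (Rabs_pos_eq (energy c x1 x2 x3 * energy c q1 q2 q3)) by nra.
  apply Rsqr_le_abs_0.
  unfold Rsqr. unfold dot3, sq3 in *.
  replace (energy c x1 x2 x3 * energy c q1 q2 q3 * (energy c x1 x2 x3 * energy c q1 q2 q3))
    with (energy c x1 x2 x3 ^2 * energy c q1 q2 q3 ^2) by ring.
  rewrite E1, E2.
  pose proof (pow2_ge_0 (x1*q2-x2*q1)). pose proof (pow2_ge_0 (x1*q3-x3*q1)).
  pose proof (pow2_ge_0 (x2*q3-x3*q2)). pose proof (pow2_ge_0 c).
  pose proof (pow2_ge_0 x1). pose proof (pow2_ge_0 x2). pose proof (pow2_ge_0 x3).
  pose proof (pow2_ge_0 q1). pose proof (pow2_ge_0 q2). pose proof (pow2_ge_0 q3).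
  nra.
Qed.

Lemma mand_pos c x1 x2 x3 q1 q2 q3 : 1 <= c -> 2 * c^2 <= mand_s c x1 x2 x3 q1 q2 q3.
Proof.
  intros Hc. pose proof (dot_abs c x1 x2 x3 q1 q2 q3). unfold mand_s.
  pose proof (Rle_abs (dot3 x1 x2 x3 q1 q2 q3)). nra.
Qed.

Ltac possq := repeat match goal with |- context [sqrt ?a] =>
   lazymatch goal with H: 0 < sqrt a |- _ => fail | _ => assert (0 < sqrt a) by (apply sqrt_lt_R0; nra) end end.

Ltac dtac HX := unfold energy, dot3, sq3 in *; unfold Rminus in *; cbn [pow] in *; auto_derive;
   [ repeat split; try nra; try exact HX | possq; field; repeat split; lra ].

Definition PP c x1 x2 x3 := energy c x1 x2 x3.

Lemma dP1 c x1 x2 x3 : 1 <= c ->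
  is_derive (fun t => energy c t x2 x3) x1 (x1 * / energy c x1 x2 x3).
Proof. intros Hc. dtac Hc. Qed.
Lemma dP2 c x1 x2 x3 : 1 <= c ->
  is_derive (fun t => energy c x1 t x3) x2 (x2 * / energy c x1 x2 x3).
Proof. intros Hc. dtac Hc. Qed.
Lemma dP3 c x1 x2 x3 : 1 <= c ->
  is_derive (fun t => energy c x1 x2 t) x3 (x3 * / energy c x1 x2 x3).
Proof. intros Hc. dtac Hc. Qed.

Lemma dG1 c x1 x2 x3 q1 q2 q3 : 1 <= c -> 0 < Xg c x1 x2 x3 q1 q2 q3 ->
  is_derive (fun t => rel_g c t x2 x3 q1 q2 q3) x1
   ((x1 * energy c q1 q2 q3 * / energy c x1 x2 x3 - q1) * / rel_g c x1 x2 x3 q1 q2 q3).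
Proof. intros Hc HX. unfold Xg in HX. unfold rel_g. dtac HX. Qed.
Lemma dG2 c x1 x2 x3 q1 q2 q3 : 1 <= c -> 0 < Xg c x1 x2 x3 q1 q2 q3 ->
  is_derive (fun t => rel_g c x1 t x3 q1 q2 q3) x2
   ((x2 * energy c q1 q2 q3 * / energy c x1 x2 x3 - q2) * / rel_g c x1 x2 x3 q1 q2 q3).
Proof. intros Hc HX. unfold Xg in HX. unfold rel_g. dtac HX. Qed.
Lemma dG3 c x1 x2 x3 q1 q2 q3 : 1 <= c -> 0 < Xg c x1 x2 x3 q1 q2 q3 ->
  is_derive (fun t => rel_g c x1 x2 t q1 q2 q3) x3
   ((x3 * energy c q1 q2 q3 * / energy c x1 x2 x3 - q3) * / rel_g c x1 x2 x3 q1 q2 q3).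
Proof. intros Hc HX. unfold Xg in HX. unfold rel_g. dtac HX. Qed.

Lemma dS1 c x1 x2 x3 q1 q2 q3 : 1 <= c ->
  is_derive (fun t => sqrt (mand_s c t x2 x3 q1 q2 q3)) x1
   ((x1 * energy c q1 q2 q3 * / energy c x1 x2 x3 - q1) * / sqrt (mand_s c x1 x2 x3 q1 q2 q3)).
Proof. intros Hc. pose proof (mand_pos c x1 x2 x3 q1 q2 q3 Hc) as HX. unfold mand_s in *. dtac HX. Qed.
Lemma dS2 c x1 x2 x3 q1 q2 q3 : 1 <= c ->
  is_derive (fun t => sqrt (mand_s c x1 t x3 q1 q2 q3)) x2
   ((x2 * energy c q1 q2 q3 * / energy c x1 x2 x3 - q2) * / sqrt (mand_s c x1 x2 x3 q1 q2 q3)).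
Proof. intros Hc. pose proof (mand_pos c x1 x2 x3 q1 q2 q3 Hc) as HX. unfold mand_s in *. dtac HX. Qed.
Lemma dS3 c x1 x2 x3 q1 q2 q3 : 1 <= c ->
  is_derive (fun t => sqrt (mand_s c x1 x2 t q1 q2 q3)) x3
   ((x3 * energy c q1 q2 q3 * / energy c x1 x2 x3 - q3) * / sqrt (mand_s c x1 x2 x3 q1 q2 q3)).
Proof. intros Hc. pose proof (mand_pos c x1 x2 x3 q1 q2 q3 Hc) as HX. unfold mand_s in *. dtac HX. Qed.

Inductive dir := I1 | I2 | I3.
Record mono := Mono {co:R; a1:nat; a2:nat; a3:nat; d1:nat; d2:nat; d3:nat; ee:nat;
  mp:nat; mn:nat; gp:nat; gn:nat; sp:nat; sn:nat}.

Definition eval c q1 q2 q3 m x1 x2 x3 : R :=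
  co m * (x1 ^ a1 m * x2 ^ a2 m * x3 ^ a3 m)
  * (q1 ^ d1 m * q2 ^ d2 m * q3 ^ d3 m * energy c q1 q2 q3 ^ ee m)
  * (energy c x1 x2 x3 ^ mp m * (/ energy c x1 x2 x3) ^ mn m)
  * (rel_g c x1 x2 x3 q1 q2 q3 ^ gp m * (/ rel_g c x1 x2 x3 q1 q2 q3) ^ gn m)
  * (sqrt (mand_s c x1 x2 x3 q1 q2 q3) ^ sp m * (/ sqrt (mand_s c x1 x2 x3 q1 q2 q3)) ^ sn m).

Definition evalL c q1 q2 q3 (l : list mono) x1 x2 x3 : R :=
  fold_right (fun m acc => eval c q1 q2 q3 m x1 x2 x3 + acc) 0 l.

Definition getA i m := match i with I1 => a1 m | I2 => a2 m | I3 => a3 m end.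
Definition setA i k m := match i with
 | I1 => Mono (co m) k (a2 m) (a3 m) (d1 m) (d2 m) (d3 m) (ee m) (mp m) (mn m) (gp m) (gn m) (sp m) (sn m)
 | I2 => Mono (co m) (a1 m) k (a3 m) (d1 m) (d2 m) (d3 m) (ee m) (mp m) (mn m) (gp m) (gn m) (sp m) (sn m)
 | I3 => Mono (co m) (a1 m) (a2 m) k (d1 m) (d2 m) (d3 m) (ee m) (mp m) (mn m) (gp m) (gn m) (sp m) (sn m)
 end.
Definition incA i m := setA i (S (getA i m)) m.
Definition incD i m := match i with
 | I1 => Mono (co m) (a1 m) (a2 m) (a3 m) (S (d1 m)) (d2 m) (d3 m) (ee m) (mp m) (mn m) (gp m) (gn m) (sp m) (sn m)
 | I2 => Mono (co m) (a1 m) (a2 m) (a3 m) (d1 m) (S (d2 m)) (d3 m) (ee m) (mp m) (mn m) (gp m) (gn m) (sp m) (sn m)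
 | I3 => Mono (co m) (a1 m) (a2 m) (a3 m) (d1 m) (d2 m) (S (d3 m)) (ee m) (mp m) (mn m) (gp m) (gn m) (sp m) (sn m)
 end.
Definition scale r m :=
  Mono (co m * r) (a1 m) (a2 m) (a3 m) (d1 m) (d2 m) (d3 m) (ee m) (mp m) (mn m) (gp m) (gn m) (sp m) (sn m).
Definition incE m :=
  Mono (co m) (a1 m) (a2 m) (a3 m) (d1 m) (d2 m) (d3 m) (S (ee m)) (mp m) (mn m) (gp m) (gn m) (sp m) (sn m).
Definition setMP k m :=
  Mono (co m) (a1 m) (a2 m) (a3 m) (d1 m) (d2 m) (d3 m) (ee m) k (mn m) (gp m) (gn m) (sp m) (sn m).
Definition setMN k m :=
  Mono (co m) (a1 m) (a2 m) (a3 m) (d1 m) (d2 m) (d3 m) (ee m) (mp m) k (gp m) (gn m) (sp m) (sn m).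
Definition setGP k m :=
  Mono (co m) (a1 m) (a2 m) (a3 m) (d1 m) (d2 m) (d3 m) (ee m) (mp m) (mn m) k (gn m) (sp m) (sn m).
Definition setGN k m :=
  Mono (co m) (a1 m) (a2 m) (a3 m) (d1 m) (d2 m) (d3 m) (ee m) (mp m) (mn m) (gp m) k (sp m) (sn m).
Definition setSP k m :=
  Mono (co m) (a1 m) (a2 m) (a3 m) (d1 m) (d2 m) (d3 m) (ee m) (mp m) (mn m) (gp m) (gn m) k (sn m).
Definition setSN k m :=
  Mono (co m) (a1 m) (a2 m) (a3 m) (d1 m) (d2 m) (d3 m) (ee m) (mp m) (mn m) (gp m) (gn m) (sp m) k.

Definition partA i m := match getA i m with 0%nat => nil | S k => scale (INR (S k)) (setA i k m) :: nil end.
Definition partP i m :=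
  (match mp m with 0%nat => nil | S k => scale (INR (S k)) (incA i (setMN (S (mn m)) (setMP k m))) :: nil end)
  ++ (match mn m with 0%nat => nil | S k => scale (- INR (S k)) (incA i (setMN (S (S (S k))) m)) :: nil end).
Definition partG i m :=
  (match gp m with 0%nat => nil | S k =>
     scale (INR (S k)) (incA i (incE (setMN (S (mn m)) (setGN (S (gn m)) (setGP k m)))))
     :: scale (- INR (S k)) (incD i (setGN (S (gn m)) (setGP k m))) :: nil end)
  ++ (match gn m with 0%nat => nil | S k =>
     scale (- INR (S k)) (incA i (incE (setMN (S (mn m)) (setGN (S (S (S k))) m))))
     :: scale (INR (S k)) (incD i (setGN (S (S (S k))) m)) :: nil end).
Definition partS i m :=
  (match sp m with 0%nat => nil | S k =>
     scale (INR (S k)) (incA i (incE (setMN (S (mn m)) (setSN (S (sn m)) (setSP k m)))))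
     :: scale (- INR (S k)) (incD i (setSN (S (sn m)) (setSP k m))) :: nil end)
  ++ (match sn m with 0%nat => nil | S k =>
     scale (- INR (S k)) (incA i (incE (setMN (S (mn m)) (setSN (S (S (S k))) m))))
     :: scale (INR (S k)) (incD i (setSN (S (S (S k))) m)) :: nil end).
Definition Dm i m := partA i m ++ partP i m ++ partG i m ++ partS i m.
Definition DL i l := flat_map (Dm i) l.

Lemma evalL_app c q1 q2 q3 l1 l2 x1 x2 x3 :
  evalL c q1 q2 q3 (l1 ++ l2) x1 x2 x3 = evalL c q1 q2 q3 l1 x1 x2 x3 + evalL c q1 q2 q3 l2 x1 x2 x3.
Proof. induction l1; simpl. ring. unfold evalL in *. simpl. rewrite IHl1. ring. Qed.

Lemma mul_d f g t a b : is_derive f t a -> is_derive g t b ->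
  is_derive (fun s => f s * g s) t (a * g t + f t * b).
Proof. intros Hf Hg. exact (is_derive_mult f g t a b Hf Hg Rmult_comm). Qed.
Lemma add_d f g t a b : is_derive f t a -> is_derive g t b ->
  is_derive (fun s => f s + g s) t (a + b).
Proof. intros Hf Hg. exact (is_derive_plus f g t a b Hf Hg). Qed.

Definition dpw (m n : nat) (v v' : R) : R :=
  (match m with 0%nat => 0 | S k => INR (S k) * v' * v ^ k * (/ v) ^ n end)
  + (match n with 0%nat => 0 | S k => - INR (S k) * v' * v ^ m * (/ v) ^ (S (S k)) end).

Lemma dpw_ok u t u' m n : is_derive u t u' -> u t <> 0 ->
  is_derive (fun s => u s ^ m * (/ u s) ^ n) t (dpw m n (u t) u').
Proof.
  intros Hu Hn.
  pose proof (mul_d _ _ t _ _ (is_derive_pow u m t u' Hu)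
     (is_derive_pow _ n t _ (is_derive_inv u t u' Hu Hn))) as H.
  replace (dpw m n (u t) u') with
    (INR m * u' * u t ^ Init.Nat.pred m * (/ u t) ^ n + u t ^ m * (INR n * (- u' / u t ^ 2) * (/ u t) ^ Init.Nat.pred n)).
  exact H.
  unfold dpw. destruct m; destruct n; simpl; field; auto.
Qed.

Definition dA (a : nat) (t : R) : R := match a with 0%nat => 0 | S k => INR (S k) * t ^ k end.
Lemma dA_ok a t : is_derive (fun s => s ^ a) t (dA a t).
Proof.
  pose proof (is_derive_pow (fun s => s) a t 1 (is_derive_id t)) as H.
  replace (dA a t) with (INR a * 1 * t ^ Init.Nat.pred a). exact H.
  destruct a; simpl; ring.
Qed.

Lemma deriv_eq (f : R -> R) (t a b : R) : is_derive f t a -> a = b -> is_derive f t b.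
Proof. intros H ->; exact H. Qed.

Lemma cst_d (k t : R) : is_derive (fun _ : R => k) t 0.
Proof. exact (@is_derive_const R_AbsRing R_NormedModule k t). Qed.

Lemma rel_g_pos c x1 x2 x3 q1 q2 q3 : 0 < Xg c x1 x2 x3 q1 q2 q3 -> 0 < rel_g c x1 x2 x3 q1 q2 q3.
Proof. intros; unfold rel_g; apply sqrt_lt_R0; exact H. Qed.
Lemma S_pos c x1 x2 x3 q1 q2 q3 : 1 <= c -> 0 < sqrt (mand_s c x1 x2 x3 q1 q2 q3).
Proof. intros; apply sqrt_lt_R0; pose proof (mand_pos c x1 x2 x3 q1 q2 q3 H); nra. Qed.


Lemma eA1 c q1 q2 q3 m x1 x2 x3 :
  evalL c q1 q2 q3 (partA I1 m) x1 x2 x3 = co m * (dA (a1 m) x1 * x2 ^ a2 m * x3 ^ a3 m) * (q1 ^ d1 m * q2 ^ d2 m * q3 ^ d3 m * energy c q1 q2 q3 ^ ee m) * (energy c x1 x2 x3 ^ mp m * (/ energy c x1 x2 x3) ^ mn m) * (rel_g c x1 x2 x3 q1 q2 q3 ^ gp m * (/ rel_g c x1 x2 x3 q1 q2 q3) ^ gn m) * (sqrt (mand_s c x1 x2 x3 q1 q2 q3) ^ sp m * (/ sqrt (mand_s c x1 x2 x3 q1 q2 q3)) ^ sn m).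
Proof.
  destruct m as [co a1 a2 a3 d1 d2 d3 ee mp mn gp gn sp sn].
  unfold partA, dA; cbn -[INR pow energy rel_g mand_s].
  destruct a1; unfold evalL, eval; cbn -[INR energy rel_g mand_s]; ring.
Qed.
Lemma eP1 c q1 q2 q3 m x1 x2 x3 :
  evalL c q1 q2 q3 (partP I1 m) x1 x2 x3 = co m * (x1 ^ a1 m * x2 ^ a2 m * x3 ^ a3 m) * (q1 ^ d1 m * q2 ^ d2 m * q3 ^ d3 m * energy c q1 q2 q3 ^ ee m) * dpw (mp m) (mn m) (energy c x1 x2 x3) (x1 * / energy c x1 x2 x3) * (rel_g c x1 x2 x3 q1 q2 q3 ^ gp m * (/ rel_g c x1 x2 x3 q1 q2 q3) ^ gn m) * (sqrt (mand_s c x1 x2 x3 q1 q2 q3) ^ sp m * (/ sqrt (mand_s c x1 x2 x3 q1 q2 q3)) ^ sn m).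
Proof.
  destruct m as [co a1 a2 a3 d1 d2 d3 ee mp mn gp gn sp sn].
  unfold partP, dpw; cbn -[INR pow energy rel_g mand_s].
  destruct mp, mn; unfold evalL, eval; cbn -[INR energy rel_g mand_s]; ring.
Qed.
Lemma eG1 c q1 q2 q3 m x1 x2 x3 :
  evalL c q1 q2 q3 (partG I1 m) x1 x2 x3 = co m * (x1 ^ a1 m * x2 ^ a2 m * x3 ^ a3 m) * (q1 ^ d1 m * q2 ^ d2 m * q3 ^ d3 m * energy c q1 q2 q3 ^ ee m) * (energy c x1 x2 x3 ^ mp m * (/ energy c x1 x2 x3) ^ mn m) * dpw (gp m) (gn m) (rel_g c x1 x2 x3 q1 q2 q3) ((x1 * energy c q1 q2 q3 * / energy c x1 x2 x3 - q1) * / rel_g c x1 x2 x3 q1 q2 q3) * (sqrt (mand_s c x1 x2 x3 q1 q2 q3) ^ sp m * (/ sqrt (mand_s c x1 x2 x3 q1 q2 q3)) ^ sn m).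
Proof.
  destruct m as [co a1 a2 a3 d1 d2 d3 ee mp mn gp gn sp sn].
  unfold partG, dpw; cbn -[INR pow energy rel_g mand_s].
  destruct gp, gn; unfold evalL, eval; cbn -[INR energy rel_g mand_s]; ring.
Qed.
Lemma eS1 c q1 q2 q3 m x1 x2 x3 :
  evalL c q1 q2 q3 (partS I1 m) x1 x2 x3 = co m * (x1 ^ a1 m * x2 ^ a2 m * x3 ^ a3 m) * (q1 ^ d1 m * q2 ^ d2 m * q3 ^ d3 m * energy c q1 q2 q3 ^ ee m) * (energy c x1 x2 x3 ^ mp m * (/ energy c x1 x2 x3) ^ mn m) * (rel_g c x1 x2 x3 q1 q2 q3 ^ gp m * (/ rel_g c x1 x2 x3 q1 q2 q3) ^ gn m) * dpw (sp m) (sn m) (sqrt (mand_s c x1 x2 x3 q1 q2 q3)) ((x1 * energy c q1 q2 q3 * / energy c x1 x2 x3 - q1) * / sqrt (mand_s c x1 x2 x3 q1 q2 q3)).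
Proof.
  destruct m as [co a1 a2 a3 d1 d2 d3 ee mp mn gp gn sp sn].
  unfold partS, dpw; cbn -[INR pow energy rel_g mand_s].
  destruct sp, sn; unfold evalL, eval; cbn -[INR energy rel_g mand_s]; ring.
Qed.

Lemma deriv_m1 c q1 q2 q3 m x1 x2 x3 : 1 <= c -> 0 < Xg c x1 x2 x3 q1 q2 q3 ->
  is_derive (fun t => eval c q1 q2 q3 m t x2 x3) x1 (evalL c q1 q2 q3 (Dm I1 m) x1 x2 x3).
Proof.
  intros Hc HX.
  pose proof (energy_pos c x1 x2 x3 Hc) as HP0.
  pose proof (rel_g_pos _ _ _ _ _ _ _ HX) as HG0.
  pose proof (S_pos c x1 x2 x3 q1 q2 q3 Hc) as HS0.
  pose proof (dpw_ok (fun t => energy c t x2 x3) x1 _ (mp m) (mn m) (dP1 c x1 x2 x3 Hc) ltac:(simpl; lra)) as HP.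
  pose proof (dpw_ok (fun t => rel_g c t x2 x3 q1 q2 q3) x1 _ (gp m) (gn m) (dG1 c x1 x2 x3 q1 q2 q3 Hc HX) ltac:(simpl; lra)) as HG.
  pose proof (dpw_ok (fun t => sqrt (mand_s c t x2 x3 q1 q2 q3)) x1 _ (sp m) (sn m) (dS1 c x1 x2 x3 q1 q2 q3 Hc) ltac:(simpl; lra)) as HS.
  pose proof (dA_ok (a1 m) x1) as HA.
  pose proof (mul_d _ _ _ _ _ (mul_d _ _ _ _ _ (mul_d _ _ _ _ _ (mul_d _ _ _ _ _ (mul_d _ _ _ _ _ (cst_d (co m) x1)
     (mul_d _ _ _ _ _ (mul_d _ _ _ _ _ HA (cst_d (x2 ^ a2 m) x1)) (cst_d (x3 ^ a3 m) x1)))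
     (cst_d (q1 ^ d1 m * q2 ^ d2 m * q3 ^ d3 m * energy c q1 q2 q3 ^ ee m) x1)) HP) HG) HS) as H.
  eapply deriv_eq. exact H.
  unfold Dm. rewrite !evalL_app, eA1, eP1, eG1, eS1. cbn beta. ring.
Qed.

Lemma eA2 c q1 q2 q3 m x1 x2 x3 :
  evalL c q1 q2 q3 (partA I2 m) x1 x2 x3 = co m * (x1 ^ a1 m * dA (a2 m) x2 * x3 ^ a3 m) * (q1 ^ d1 m * q2 ^ d2 m * q3 ^ d3 m * energy c q1 q2 q3 ^ ee m) * (energy c x1 x2 x3 ^ mp m * (/ energy c x1 x2 x3) ^ mn m) * (rel_g c x1 x2 x3 q1 q2 q3 ^ gp m * (/ rel_g c x1 x2 x3 q1 q2 q3) ^ gn m) * (sqrt (mand_s c x1 x2 x3 q1 q2 q3) ^ sp m * (/ sqrt (mand_s c x1 x2 x3 q1 q2 q3)) ^ sn m).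
Proof.
  destruct m as [co a1 a2 a3 d1 d2 d3 ee mp mn gp gn sp sn].
  unfold partA, dA; cbn -[INR pow energy rel_g mand_s].
  destruct a2; unfold evalL, eval; cbn -[INR energy rel_g mand_s]; ring.
Qed.
Lemma eP2 c q1 q2 q3 m x1 x2 x3 :
  evalL c q1 q2 q3 (partP I2 m) x1 x2 x3 = co m * (x1 ^ a1 m * x2 ^ a2 m * x3 ^ a3 m) * (q1 ^ d1 m * q2 ^ d2 m * q3 ^ d3 m * energy c q1 q2 q3 ^ ee m) * dpw (mp m) (mn m) (energy c x1 x2 x3) (x2 * / energy c x1 x2 x3) * (rel_g c x1 x2 x3 q1 q2 q3 ^ gp m * (/ rel_g c x1 x2 x3 q1 q2 q3) ^ gn m) * (sqrt (mand_s c x1 x2 x3 q1 q2 q3) ^ sp m * (/ sqrt (mand_s c x1 x2 x3 q1 q2 q3)) ^ sn m).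
Proof.
  destruct m as [co a1 a2 a3 d1 d2 d3 ee mp mn gp gn sp sn].
  unfold partP, dpw; cbn -[INR pow energy rel_g mand_s].
  destruct mp, mn; unfold evalL, eval; cbn -[INR energy rel_g mand_s]; ring.
Qed.
Lemma eG2 c q1 q2 q3 m x1 x2 x3 :
  evalL c q1 q2 q3 (partG I2 m) x1 x2 x3 = co m * (x1 ^ a1 m * x2 ^ a2 m * x3 ^ a3 m) * (q1 ^ d1 m * q2 ^ d2 m * q3 ^ d3 m * energy c q1 q2 q3 ^ ee m) * (energy c x1 x2 x3 ^ mp m * (/ energy c x1 x2 x3) ^ mn m) * dpw (gp m) (gn m) (rel_g c x1 x2 x3 q1 q2 q3) ((x2 * energy c q1 q2 q3 * / energy c x1 x2 x3 - q2) * / rel_g c x1 x2 x3 q1 q2 q3) * (sqrt (mand_s c x1 x2 x3 q1 q2 q3) ^ sp m * (/ sqrt (mand_s c x1 x2 x3 q1 q2 q3)) ^ sn m).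
Proof.
  destruct m as [co a1 a2 a3 d1 d2 d3 ee mp mn gp gn sp sn].
  unfold partG, dpw; cbn -[INR pow energy rel_g mand_s].
  destruct gp, gn; unfold evalL, eval; cbn -[INR energy rel_g mand_s]; ring.
Qed.
Lemma eS2 c q1 q2 q3 m x1 x2 x3 :
  evalL c q1 q2 q3 (partS I2 m) x1 x2 x3 = co m * (x1 ^ a1 m * x2 ^ a2 m * x3 ^ a3 m) * (q1 ^ d1 m * q2 ^ d2 m * q3 ^ d3 m * energy c q1 q2 q3 ^ ee m) * (energy c x1 x2 x3 ^ mp m * (/ energy c x1 x2 x3) ^ mn m) * (rel_g c x1 x2 x3 q1 q2 q3 ^ gp m * (/ rel_g c x1 x2 x3 q1 q2 q3) ^ gn m) * dpw (sp m) (sn m) (sqrt (mand_s c x1 x2 x3 q1 q2 q3)) ((x2 * energy c q1 q2 q3 * / energy c x1 x2 x3 - q2) * / sqrt (mand_s c x1 x2 x3 q1 q2 q3)).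
Proof.
  destruct m as [co a1 a2 a3 d1 d2 d3 ee mp mn gp gn sp sn].
  unfold partS, dpw; cbn -[INR pow energy rel_g mand_s].
  destruct sp, sn; unfold evalL, eval; cbn -[INR energy rel_g mand_s]; ring.
Qed.

Lemma deriv_m2 c q1 q2 q3 m x1 x2 x3 : 1 <= c -> 0 < Xg c x1 x2 x3 q1 q2 q3 ->
  is_derive (fun t => eval c q1 q2 q3 m x1 t x3) x2 (evalL c q1 q2 q3 (Dm I2 m) x1 x2 x3).
Proof.
  intros Hc HX.
  pose proof (energy_pos c x1 x2 x3 Hc) as HP0.
  pose proof (rel_g_pos _ _ _ _ _ _ _ HX) as HG0.
  pose proof (S_pos c x1 x2 x3 q1 q2 q3 Hc) as HS0.
  pose proof (dpw_ok (fun t => energy c x1 t x3) x2 _ (mp m) (mn m) (dP2 c x1 x2 x3 Hc) ltac:(simpl; lra)) as HP.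
  pose proof (dpw_ok (fun t => rel_g c x1 t x3 q1 q2 q3) x2 _ (gp m) (gn m) (dG2 c x1 x2 x3 q1 q2 q3 Hc HX) ltac:(simpl; lra)) as HG.
  pose proof (dpw_ok (fun t => sqrt (mand_s c x1 t x3 q1 q2 q3)) x2 _ (sp m) (sn m) (dS2 c x1 x2 x3 q1 q2 q3 Hc) ltac:(simpl; lra)) as HS.
  pose proof (dA_ok (a2 m) x2) as HA.
  pose proof (mul_d _ _ _ _ _ (mul_d _ _ _ _ _ (mul_d _ _ _ _ _ (mul_d _ _ _ _ _ (mul_d _ _ _ _ _ (cst_d (co m) x2)
     (mul_d _ _ _ _ _ (mul_d _ _ _ _ _ (cst_d (x1 ^ a1 m) x2) HA) (cst_d (x3 ^ a3 m) x2)))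
     (cst_d (q1 ^ d1 m * q2 ^ d2 m * q3 ^ d3 m * energy c q1 q2 q3 ^ ee m) x2)) HP) HG) HS) as H.
  eapply deriv_eq. exact H.
  unfold Dm. rewrite !evalL_app, eA2, eP2, eG2, eS2. cbn beta. ring.
Qed.

Lemma eA3 c q1 q2 q3 m x1 x2 x3 :
  evalL c q1 q2 q3 (partA I3 m) x1 x2 x3 = co m * (x1 ^ a1 m * x2 ^ a2 m * dA (a3 m) x3) * (q1 ^ d1 m * q2 ^ d2 m * q3 ^ d3 m * energy c q1 q2 q3 ^ ee m) * (energy c x1 x2 x3 ^ mp m * (/ energy c x1 x2 x3) ^ mn m) * (rel_g c x1 x2 x3 q1 q2 q3 ^ gp m * (/ rel_g c x1 x2 x3 q1 q2 q3) ^ gn m) * (sqrt (mand_s c x1 x2 x3 q1 q2 q3) ^ sp m * (/ sqrt (mand_s c x1 x2 x3 q1 q2 q3)) ^ sn m).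
Proof.
  destruct m as [co a1 a2 a3 d1 d2 d3 ee mp mn gp gn sp sn].
  unfold partA, dA; cbn -[INR pow energy rel_g mand_s].
  destruct a3; unfold evalL, eval; cbn -[INR energy rel_g mand_s]; ring.
Qed.
Lemma eP3 c q1 q2 q3 m x1 x2 x3 :
  evalL c q1 q2 q3 (partP I3 m) x1 x2 x3 = co m * (x1 ^ a1 m * x2 ^ a2 m * x3 ^ a3 m) * (q1 ^ d1 m * q2 ^ d2 m * q3 ^ d3 m * energy c q1 q2 q3 ^ ee m) * dpw (mp m) (mn m) (energy c x1 x2 x3) (x3 * / energy c x1 x2 x3) * (rel_g c x1 x2 x3 q1 q2 q3 ^ gp m * (/ rel_g c x1 x2 x3 q1 q2 q3) ^ gn m) * (sqrt (mand_s c x1 x2 x3 q1 q2 q3) ^ sp m * (/ sqrt (mand_s c x1 x2 x3 q1 q2 q3)) ^ sn m).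
Proof.
  destruct m as [co a1 a2 a3 d1 d2 d3 ee mp mn gp gn sp sn].
  unfold partP, dpw; cbn -[INR pow energy rel_g mand_s].
  destruct mp, mn; unfold evalL, eval; cbn -[INR energy rel_g mand_s]; ring.
Qed.
Lemma eG3 c q1 q2 q3 m x1 x2 x3 :
  evalL c q1 q2 q3 (partG I3 m) x1 x2 x3 = co m * (x1 ^ a1 m * x2 ^ a2 m * x3 ^ a3 m) * (q1 ^ d1 m * q2 ^ d2 m * q3 ^ d3 m * energy c q1 q2 q3 ^ ee m) * (energy c x1 x2 x3 ^ mp m * (/ energy c x1 x2 x3) ^ mn m) * dpw (gp m) (gn m) (rel_g c x1 x2 x3 q1 q2 q3) ((x3 * energy c q1 q2 q3 * / energy c x1 x2 x3 - q3) * / rel_g c x1 x2 x3 q1 q2 q3) * (sqrt (mand_s c x1 x2 x3 q1 q2 q3) ^ sp m * (/ sqrt (mand_s c x1 x2 x3 q1 q2 q3)) ^ sn m).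
Proof.
  destruct m as [co a1 a2 a3 d1 d2 d3 ee mp mn gp gn sp sn].
  unfold partG, dpw; cbn -[INR pow energy rel_g mand_s].
  destruct gp, gn; unfold evalL, eval; cbn -[INR energy rel_g mand_s]; ring.
Qed.
Lemma eS3 c q1 q2 q3 m x1 x2 x3 :
  evalL c q1 q2 q3 (partS I3 m) x1 x2 x3 = co m * (x1 ^ a1 m * x2 ^ a2 m * x3 ^ a3 m) * (q1 ^ d1 m * q2 ^ d2 m * q3 ^ d3 m * energy c q1 q2 q3 ^ ee m) * (energy c x1 x2 x3 ^ mp m * (/ energy c x1 x2 x3) ^ mn m) * (rel_g c x1 x2 x3 q1 q2 q3 ^ gp m * (/ rel_g c x1 x2 x3 q1 q2 q3) ^ gn m) * dpw (sp m) (sn m) (sqrt (mand_s c x1 x2 x3 q1 q2 q3)) ((x3 * energy c q1 q2 q3 * / energy c x1 x2 x3 - q3) * / sqrt (mand_s c x1 x2 x3 q1 q2 q3)).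
Proof.
  destruct m as [co a1 a2 a3 d1 d2 d3 ee mp mn gp gn sp sn].
  unfold partS, dpw; cbn -[INR pow energy rel_g mand_s].
  destruct sp, sn; unfold evalL, eval; cbn -[INR energy rel_g mand_s]; ring.
Qed.

Lemma deriv_m3 c q1 q2 q3 m x1 x2 x3 : 1 <= c -> 0 < Xg c x1 x2 x3 q1 q2 q3 ->
  is_derive (fun t => eval c q1 q2 q3 m x1 x2 t) x3 (evalL c q1 q2 q3 (Dm I3 m) x1 x2 x3).
Proof.
  intros Hc HX.
  pose proof (energy_pos c x1 x2 x3 Hc) as HP0.
  pose proof (rel_g_pos _ _ _ _ _ _ _ HX) as HG0.
  pose proof (S_pos c x1 x2 x3 q1 q2 q3 Hc) as HS0.
  pose proof (dpw_ok (fun t => energy c x1 x2 t) x3 _ (mp m) (mn m) (dP3 c x1 x2 x3 Hc) ltac:(simpl; lra)) as HP.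
  pose proof (dpw_ok (fun t => rel_g c x1 x2 t q1 q2 q3) x3 _ (gp m) (gn m) (dG3 c x1 x2 x3 q1 q2 q3 Hc HX) ltac:(simpl; lra)) as HG.
  pose proof (dpw_ok (fun t => sqrt (mand_s c x1 x2 t q1 q2 q3)) x3 _ (sp m) (sn m) (dS3 c x1 x2 x3 q1 q2 q3 Hc) ltac:(simpl; lra)) as HS.
  pose proof (dA_ok (a3 m) x3) as HA.
  pose proof (mul_d _ _ _ _ _ (mul_d _ _ _ _ _ (mul_d _ _ _ _ _ (mul_d _ _ _ _ _ (mul_d _ _ _ _ _ (cst_d (co m) x3)
     (mul_d _ _ _ _ _ (cst_d (x1 ^ a1 m * x2 ^ a2 m) x3) HA))
     (cst_d (q1 ^ d1 m * q2 ^ d2 m * q3 ^ d3 m * energy c q1 q2 q3 ^ ee m) x3)) HP) HG) HS) as H.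
  eapply deriv_eq. exact H.
  unfold Dm. rewrite !evalL_app, eA3, eP3, eG3, eS3. cbn beta. ring.
Qed.

Lemma evalL_cons c q1 q2 q3 m l x1 x2 x3 :
  evalL c q1 q2 q3 (m :: l) x1 x2 x3 = eval c q1 q2 q3 m x1 x2 x3 + evalL c q1 q2 q3 l x1 x2 x3.
Proof. reflexivity. Qed.

Lemma DL_cons i m l : DL i (m :: l) = Dm i m ++ DL i l.
Proof. reflexivity. Qed.

Lemma derivL1 c q1 q2 q3 l x1 x2 x3 : 1 <= c -> 0 < Xg c x1 x2 x3 q1 q2 q3 ->
  is_derive (fun t => evalL c q1 q2 q3 l t x2 x3) x1 (evalL c q1 q2 q3 (DL I1 l) x1 x2 x3).
Proof.
  intros Hc HX. induction l as [|m l IH].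
  - simpl. apply cst_d.
  - rewrite DL_cons, evalL_app. apply add_d. apply deriv_m1; auto. exact IH.
Qed.
Lemma derivL2 c q1 q2 q3 l x1 x2 x3 : 1 <= c -> 0 < Xg c x1 x2 x3 q1 q2 q3 ->
  is_derive (fun t => evalL c q1 q2 q3 l x1 t x3) x2 (evalL c q1 q2 q3 (DL I2 l) x1 x2 x3).
Proof.
  intros Hc HX. induction l as [|m l IH].
  - simpl. apply cst_d.
  - rewrite DL_cons, evalL_app. apply add_d. apply deriv_m2; auto. exact IH.
Qed.
Lemma derivL3 c q1 q2 q3 l x1 x2 x3 : 1 <= c -> 0 < Xg c x1 x2 x3 q1 q2 q3 ->
  is_derive (fun t => evalL c q1 q2 q3 l x1 x2 t) x3 (evalL c q1 q2 q3 (DL I3 l) x1 x2 x3).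
Proof.
  intros Hc HX. induction l as [|m l IH].
  - simpl. apply cst_d.
  - rewrite DL_cons, evalL_app. apply add_d. apply deriv_m3; auto. exact IH.
Qed.

Lemma iterD_loc (V : R -> Prop) (h : nat -> R -> R) (f : R -> R) :
  (forall t, V t -> locally t V) ->
  (forall n t, V t -> is_derive (h n) t (h (S n) t)) ->
  (forall t, V t -> f t = h O t) ->
  forall n t, V t -> iterD n f t = h n t.
Proof.
  intros Hop Hd Hf n. induction n as [|n IH]; intros t Vt; simpl; auto.
  rewrite (Derive_ext_loc _ (h n) t).
  - apply is_derive_unique; auto.
  - eapply filter_imp; [|apply Hop; exact Vt]. intros s Vs. apply IH; auto.
Qed.

Lemma open_pos (f : R -> R) t : ex_derive f t -> 0 < f t -> locally t (fun s => 0 < f s).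
Proof.
  intros Hd Hp. apply ex_derive_continuous in Hd.
  assert (Hl : locally (f t) (fun y => 0 < y)).
  { exists (mkposreal _ Hp). intros y Hy. unfold ball in Hy; simpl in Hy.
    unfold AbsRing_ball, abs, minus, plus, opp in Hy; simpl in Hy.
    apply Rabs_lt_between in Hy. lra. }
  exact (Hd _ Hl).
Qed.

Lemma exX1 c x1 x2 x3 q1 q2 q3 : 1 <= c -> ex_derive (fun t => Xg c t x2 x3 q1 q2 q3) x1.
Proof. intros Hc. unfold Xg, energy, dot3, sq3. auto_derive. repeat split; nra. Qed.
Lemma exX2 c x1 x2 x3 q1 q2 q3 : 1 <= c -> ex_derive (fun t => Xg c x1 t x3 q1 q2 q3) x2.
Proof. intros Hc. unfold Xg, energy, dot3, sq3. auto_derive. repeat split; nra. Qed.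
Lemma exX3 c x1 x2 x3 q1 q2 q3 : 1 <= c -> ex_derive (fun t => Xg c x1 x2 t q1 q2 q3) x3.
Proof. intros Hc. unfold Xg, energy, dot3, sq3. auto_derive. repeat split; nra. Qed.

Lemma iter1 c q1 q2 q3 L (Fa : R -> R) y2 y3 : 1 <= c ->
  (forall t, 0 < Xg c t y2 y3 q1 q2 q3 -> Fa t = evalL c q1 q2 q3 L t y2 y3) ->
  forall n t, 0 < Xg c t y2 y3 q1 q2 q3 ->
  iterD n Fa t = evalL c q1 q2 q3 (Nat.iter n (DL I1) L) t y2 y3.
Proof.
  intros Hc HF. apply (iterD_loc (fun t => 0 < Xg c t y2 y3 q1 q2 q3)
     (fun n t => evalL c q1 q2 q3 (Nat.iter n (DL I1) L) t y2 y3)).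
  - intros t Ht. apply (open_pos (fun t => Xg c t y2 y3 q1 q2 q3)); auto. apply exX1; auto.
  - intros n t Ht. simpl. apply derivL1; auto.
  - exact HF.
Qed.
Lemma iter2 c q1 q2 q3 L (Fa : R -> R) y1 y3 : 1 <= c ->
  (forall t, 0 < Xg c y1 t y3 q1 q2 q3 -> Fa t = evalL c q1 q2 q3 L y1 t y3) ->
  forall n t, 0 < Xg c y1 t y3 q1 q2 q3 ->
  iterD n Fa t = evalL c q1 q2 q3 (Nat.iter n (DL I2) L) y1 t y3.
Proof.
  intros Hc HF. apply (iterD_loc (fun t => 0 < Xg c y1 t y3 q1 q2 q3)
     (fun n t => evalL c q1 q2 q3 (Nat.iter n (DL I2) L) y1 t y3)).
  - intros t Ht. apply (open_pos (fun t => Xg c y1 t y3 q1 q2 q3)); auto. apply exX2; auto.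
  - intros n t Ht. simpl. apply derivL2; auto.
  - exact HF.
Qed.
Lemma iter3 c q1 q2 q3 L (Fa : R -> R) y1 y2 : 1 <= c ->
  (forall t, 0 < Xg c y1 y2 t q1 q2 q3 -> Fa t = evalL c q1 q2 q3 L y1 y2 t) ->
  forall n t, 0 < Xg c y1 y2 t q1 q2 q3 ->
  iterD n Fa t = evalL c q1 q2 q3 (Nat.iter n (DL I3) L) y1 y2 t.
Proof.
  intros Hc HF. apply (iterD_loc (fun t => 0 < Xg c y1 y2 t q1 q2 q3)
     (fun n t => evalL c q1 q2 q3 (Nat.iter n (DL I3) L) y1 y2 t)).
  - intros t Ht. apply (open_pos (fun t => Xg c y1 y2 t q1 q2 q3)); auto. apply exX3; auto.
  - intros n t Ht. simpl. apply derivL3; auto.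
  - exact HF.
Qed.

Definition DB b1 b2 b3 L := Nat.iter b1 (DL I1) (Nat.iter b2 (DL I2) (Nat.iter b3 (DL I3) L)).

Lemma dmulti_eval c q1 q2 q3 L (Fa : R -> R -> R -> R) b1 b2 b3 p1 p2 p3 : 1 <= c ->
  (forall y1 y2 y3, 0 < Xg c y1 y2 y3 q1 q2 q3 -> Fa y1 y2 y3 = evalL c q1 q2 q3 L y1 y2 y3) ->
  0 < Xg c p1 p2 p3 q1 q2 q3 ->
  dmulti b1 b2 b3 Fa p1 p2 p3 = evalL c q1 q2 q3 (DB b1 b2 b3 L) p1 p2 p3.
Proof.
  intros Hc HF HX. unfold dmulti, DB.
  apply iter1; auto. intros t Ht.
  apply iter2; auto. intros s Hs.
  apply iter3; auto.
Qed.

Definition InvG (n0 : Z) (k : nat) (m : mono) : Prop :=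
  sp m = 0%nat /\ sn m = 0%nat /\ exists x y : nat, (x + y = k)%nat /\
  (a1 m + a2 m + a3 m + mp m + x = mn m)%nat /\ (d1 m + d2 m + d3 m + ee m = y)%nat /\
  (Z.of_nat (gp m) + 2 * Z.of_nat y = n0 + Z.of_nat (gn m))%Z.
Definition InvS (n0 : Z) (k : nat) (m : mono) : Prop :=
  gp m = 0%nat /\ gn m = 0%nat /\ exists x y : nat, (x + y = k)%nat /\
  (a1 m + a2 m + a3 m + mp m + x = mn m)%nat /\ (d1 m + d2 m + d3 m + ee m = y)%nat /\
  (Z.of_nat (sp m) + 2 * Z.of_nat y = n0 + Z.of_nat (sn m))%Z.

Ltac invtac x y :=
  repeat (apply List.Forall_cons || apply List.Forall_nil);
  unfold InvG, InvS; cbn -[INR Z.mul Z.of_nat Z.add];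
  (split; [reflexivity|split; [reflexivity|]]);
  first [ (exists (S x), y; repeat split; lia) | (exists x, (S y); repeat split; lia) ].

Lemma InvG_step n0 k i m : InvG n0 k m -> List.Forall (InvG n0 (S k)) (Dm i m).
Proof.
  destruct m as [co a1 a2 a3 d1 d2 d3 ee mp mn gp gn sp sn].
  intros (Hsp & Hsn & x & y & H1 & H2 & H3 & H4). cbn -[Z.mul Z.of_nat Z.add] in *. subst sp sn.
  unfold Dm, partA, partP, partG, partS. destruct i; cbn -[INR];
  [destruct a1 | destruct a2 | destruct a3]; destruct mp, mn, gp, gn; cbn -[INR]; invtac x y.
Qed.
Lemma InvS_step n0 k i m : InvS n0 k m -> List.Forall (InvS n0 (S k)) (Dm i m).
Proof.
  destruct m as [co a1 a2 a3 d1 d2 d3 ee mp mn gp gn sp sn].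
  intros (Hsp & Hsn & x & y & H1 & H2 & H3 & H4). cbn -[Z.mul Z.of_nat Z.add] in *. subst gp gn.
  unfold Dm, partA, partP, partG, partS. destruct i; cbn -[INR];
  [destruct a1 | destruct a2 | destruct a3]; destruct mp, mn, sp, sn; cbn -[INR]; invtac x y.
Qed.

Lemma Forall_DL (P P' : mono -> Prop) i l : List.Forall P l ->
  (forall m, P m -> List.Forall P' (Dm i m)) -> List.Forall P' (DL i l).
Proof.
  intros H Hs. induction H as [|m l Hm Hl IH]. constructor.
  unfold DL; simpl. apply List.Forall_app. split; auto.
Qed.

Lemma iter_inv (Inv : nat -> mono -> Prop)
  (step : forall i k m, Inv k m -> List.Forall (Inv (S k)) (Dm i m)) i n k L :
  List.Forall (Inv k) L -> List.Forall (Inv (n + k)%nat) (Nat.iter n (DL i) L).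
Proof.
  intros H. induction n as [|n IH]; simpl; auto.
  apply (Forall_DL (Inv (n + k)%nat)); auto.
Qed.

Lemma norm3_sq x1 x2 x3 : norm3 x1 x2 x3 ^ 2 = sq3 x1 x2 x3.
Proof. unfold norm3, sq3. rewrite pow2_sqrt; auto. nra. Qed.
Lemma norm3_pos x1 x2 x3 : 0 <= norm3 x1 x2 x3.
Proof. apply sqrt_pos. Qed.
Lemma energy_nn c x1 x2 x3 : 0 <= energy c x1 x2 x3.
Proof. apply sqrt_pos. Qed.

Lemma dot_le_ab x1 x2 x3 q1 q2 q3 : dot3 x1 x2 x3 q1 q2 q3 <= norm3 x1 x2 x3 * norm3 q1 q2 q3.
Proof.
  pose proof (norm3_sq x1 x2 x3). pose proof (norm3_sq q1 q2 q3).
  pose proof (norm3_pos x1 x2 x3). pose proof (norm3_pos q1 q2 q3).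
  destruct (Rle_or_lt (dot3 x1 x2 x3 q1 q2 q3) 0). nra.
  apply Rsqr_incr_0_var; [|nra]. unfold Rsqr.
  replace (norm3 x1 x2 x3 * norm3 q1 q2 q3 * (norm3 x1 x2 x3 * norm3 q1 q2 q3))
    with (norm3 x1 x2 x3 ^2 * norm3 q1 q2 q3 ^2) by ring.
  rewrite H, H0. unfold dot3, sq3.
  pose proof (pow2_ge_0 (x1*q2-x2*q1)). pose proof (pow2_ge_0 (x1*q3-x3*q1)).
  pose proof (pow2_ge_0 (x2*q3-x3*q2)). nra.
Qed.

Lemma coord_le x1 x2 x3 : Rabs x1 <= norm3 x1 x2 x3 /\ Rabs x2 <= norm3 x1 x2 x3 /\ Rabs x3 <= norm3 x1 x2 x3.
Proof.
  pose proof (norm3_sq x1 x2 x3). pose proof (norm3_pos x1 x2 x3). unfold sq3 in *.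
  repeat split; rewrite <- (Rabs_pos_eq (norm3 x1 x2 x3)) by auto;
  apply Rsqr_le_abs_0; unfold Rsqr; nra.
Qed.

Lemma omega c p1 p2 p3 q1 q2 q3 : 1 <= c -> norm3 p1 p2 p3 >= 3/2 * energy c q1 q2 q3 ->
  1 <= energy c p1 p2 p3 /\ c <= energy c q1 q2 q3 /\ energy c q1 q2 q3 <= energy c p1 p2 p3 /\
  energy c q1 q2 q3 <= c * japan q1 q2 q3 /\ 1 <= japan q1 q2 q3 /\
  0 < Xg c p1 p2 p3 q1 q2 q3 /\
  c^2 * energy c p1 p2 p3 <= 12 * energy c q1 q2 q3 * Xg c p1 p2 p3 q1 q2 q3 /\
  Xg c p1 p2 p3 q1 q2 q3 <= 4 * energy c p1 p2 p3 ^ 2 /\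
  mand_s c p1 p2 p3 q1 q2 q3 <= 6 * energy c p1 p2 p3 ^ 2 /\
  2 * c^2 <= mand_s c p1 p2 p3 q1 q2 q3 /\
  Xg c p1 p2 p3 q1 q2 q3 <= mand_s c p1 p2 p3 q1 q2 q3.
Proof.
  intros Hc Hp.
  pose proof (energy_sq c p1 p2 p3) as EP. pose proof (energy_sq c q1 q2 q3) as EQ.
  pose proof (norm3_sq p1 p2 p3) as Ea. pose proof (norm3_sq q1 q2 q3) as Eb.
  pose proof (norm3_pos p1 p2 p3) as Ha. pose proof (norm3_pos q1 q2 q3) as Hb.
  pose proof (energy_nn c p1 p2 p3) as HP. pose proof (energy_nn c q1 q2 q3) as HQ.
  pose proof (dot_le_ab p1 p2 p3 q1 q2 q3) as Hd.
  pose proof (dot_abs c p1 p2 p3 q1 q2 q3) as Hd2.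
  pose proof (Rle_abs (dot3 p1 p2 p3 q1 q2 q3)) as Hd3.
  pose proof (Rle_abs (- dot3 p1 p2 p3 q1 q2 q3)) as Hd4. rewrite Rabs_Ropp in Hd4.
  assert (EJ : japan q1 q2 q3 ^ 2 = 1 + sq3 q1 q2 q3).
  { unfold japan, sq3. rewrite pow2_sqrt; auto. nra. }
  assert (HJ0 : 0 <= japan q1 q2 q3) by apply sqrt_pos.
  unfold Xg, mand_s.
  set (P := energy c p1 p2 p3) in *. set (Q := energy c q1 q2 q3) in *.
  set (J := japan q1 q2 q3) in *. set (a := norm3 p1 p2 p3) in *.
  set (b := norm3 q1 q2 q3) in *. set (d := dot3 p1 p2 p3 q1 q2 q3) in *.
  rewrite <- Ea in EP. rewrite <- Eb in EQ, EJ.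
  assert (H1 : 1 <= P) by nra.
  assert (H2 : c <= Q) by nra.
  assert (Hpa : a <= P) by nra.
  assert (H3 : Q <= P) by nra.
  assert (H4 : Q <= c * J).
  { apply Rsqr_incr_0_var; [|nra]. unfold Rsqr.
    replace (c * J * (c * J)) with (c^2 * J^2) by ring. rewrite EJ.
    replace (Q * Q) with (Q^2) by ring. rewrite EQ.
    assert (0 <= (c^2 - 1) * b^2) by (apply Rmult_le_pos; nra). nra. }
  assert (H5 : 1 <= J) by nra.
  assert (Hid : (P*Q - a*b - c^2) * (P*Q + a*b) = c^2 * (P^2 + b^2 - P*Q - a*b)).
  { replace ((P*Q - a*b - c^2) * (P*Q + a*b)) with (P^2*Q^2 - a^2*b^2 - c^2*(P*Q+a*b)) by ring.
    rewrite EP, EQ. ring. }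
  assert (HN : P^2/12 <= P^2 + b^2 - P*Q - a*b).
  { pose proof (pow2_ge_0 (b - a/2)). nra. }
  assert (Hab : 0 <= a * b) by nra.
  assert (HPQ : 0 < P * Q) by nra.
  assert (HY : 0 < P*Q - a*b - c^2).
  { assert (0 < c^2 * (P^2 + b^2 - P*Q - a*b)).
    { apply Rmult_lt_0_compat; nra. }
    destruct (Rle_or_lt (P*Q - a*b - c^2) 0) as [Hn|Hn]; [|exact Hn].
    assert ((P*Q - a*b - c^2) * (P*Q + a*b) <= 0).
    { rewrite <- (Rmult_0_l (P*Q+a*b)). apply Rmult_le_compat_r; lra. }
    lra. }
  assert (HY2 : c^2 * P^2 / 12 <= (P*Q - a*b - c^2) * (2 * (P*Q))).
  { assert (c^2 * (P^2/12) <= c^2 * (P^2 + b^2 - P*Q - a*b)) by nra. nra. }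
  assert (H7 : c^2 * P <= 12 * Q * (2 * (P*Q - d - c^2))).
  { assert (c^2 * P * P <= 12 * Q * (2 * (P*Q - a*b - c^2)) * P) by nra. nra. }
  repeat split; try nra.
Qed.

Lemma pow_le1 (u : R) n : 0 <= u <= 1 -> u ^ n <= 1.
Proof. intros H. rewrite <- (pow1 n). apply pow_incr. lra. Qed.

Lemma idQW Q W y : W <> 0 -> Q ^ (S y) * W * (/ W) ^ (2 * S y) = (Q / W) * (Q / W / W) ^ y.
Proof.
  intros HW. induction y as [|y IH].
  - simpl. field. auto.
  - replace (2 * S (S y))%nat with (S (S (2 * S y))) by lia.
    set (n := (2 * S y)%nat) in *.
    transitivity ((Q/W/W) * (Q ^ S y * W * (/ W) ^ n)).
    + cbn [pow]. field. auto.
    + rewrite IH. cbn [pow]. ring.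
Qed.

Lemma core (P Q J W : R) (x y : nat) : 1 <= P -> 0 < Q -> 1 <= J -> 0 < W -> W <= 3 * P ->
  Q * Q <= 16 * J^2 * W^2 -> Q <= 12 * J * W^2 -> (1 <= x + y)%nat ->
  (/ P) ^ x * Q ^ y * W * (/ W) ^ (2 * y) <= (12 * J) ^ (x + y).
Proof.
  intros HP HQ HJ HW HW3 HQ1 HQ2 Hxy.
  assert (HiP : 0 <= / P <= 1).
  { split. left; apply Rinv_0_lt_compat; lra. rewrite <- Rinv_1. apply Rinv_le_contravar; lra. }
  assert (H12 : 1 <= 12 * J) by lra.
  assert (Hpx : forall k, 0 <= (/ P) ^ k <= 1) by (intros; split; [apply pow_le; lra | apply pow_le1; lra]).
  destruct y as [|y].
  - destruct x as [|x]; [lia|].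
    replace ((/ P) ^ S x * Q ^ 0 * W * (/ W) ^ (2 * 0)) with ((/ P) ^ x * (W * / P)) by (simpl; field; lra).
    assert (W * / P <= 3).
    { replace 3 with (3 * P * / P) by (field; lra). apply Rmult_le_compat_r; lra. }
    assert (0 <= W * / P) by (apply Rmult_le_pos; lra).
    apply Rle_trans with (1 * 3). { apply Rmult_le_compat; try apply Hpx; lra. }
    apply Rle_trans with ((12 * J) ^ 1). { simpl; lra. }
    apply Rle_pow; lia || lra.
  - rewrite Rmult_assoc, Rmult_assoc, <- (Rmult_assoc (Q ^ S y)), idQW by lra.
    assert (HA : 0 <= Q / W <= 4 * J).
    { split. apply Rdiv_le_0_compat; lra.
      apply Rsqr_incr_0_var; [|lra]. unfold Rsqr, Rdiv.
      replace (Q * / W * (Q * / W)) with ((Q * Q) * / W^2) by (field; lra).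
      replace (4 * J * (4 * J)) with ((16 * J^2 * W^2) * / W^2) by (field; lra).
      apply Rmult_le_compat_r; [left; apply Rinv_0_lt_compat; nra | lra]. }
    assert (HB : 0 <= Q / W / W <= 12 * J).
    { split. repeat apply Rdiv_le_0_compat; lra.
      unfold Rdiv. replace (Q * / W * / W) with (Q * / W^2) by (field; lra).
      replace (12 * J) with ((12 * J * W^2) * / W^2) by (field; lra).
      apply Rmult_le_compat_r; [left; apply Rinv_0_lt_compat; nra | lra]. }
    assert (HC : (Q / W / W) ^ y <= (12 * J) ^ y) by (apply pow_incr; lra).
    assert (HD : 0 <= (Q / W / W) ^ y) by (apply pow_le; lra).
    apply Rle_trans with (1 * (4 * J * (12 * J) ^ y)).
    { apply Rmult_le_compat; try apply Hpx. apply Rmult_le_pos; lra.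
      apply Rmult_le_compat; lra. }
    apply Rle_trans with ((12 * J) ^ (S y)).
    { simpl. assert (0 <= (12*J)^y) by (apply pow_le; lra). nra. }
    apply Rle_pow; [lra | lia].
Qed.

Lemma powpowinv u a b j k : u <> 0 -> (a + k = b + j)%nat -> u ^ a * (/ u) ^ b = u ^ j * (/ u) ^ k.
Proof.
  intros Hu Hab.
  assert (E : u ^ a * u ^ k = u ^ j * u ^ b) by (rewrite <- !pow_add; f_equal; lia).
  assert (u ^ b <> 0) by (apply pow_nonzero; auto).
  assert (u ^ k <> 0) by (apply pow_nonzero; auto).
  rewrite !pow_inv.
  replace (u ^ a * / u ^ b) with ((u ^ a * u ^ k) * / (u ^ b * u ^ k)) by (field; auto).
  rewrite E. field. auto.
Qed.

Lemma abs_prod3_le (x1 x2 x3 B : R) (a b c : nat) : Rabs x1 <= B -> Rabs x2 <= B -> Rabs x3 <= B ->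
  Rabs (x1 ^ a * x2 ^ b * x3 ^ c) <= B ^ (a + b + c).
Proof.
  intros H1 H2 H3. rewrite !Rabs_mult, <- !RPow_abs, !pow_add.
  pose proof (Rabs_pos x1). pose proof (Rabs_pos x2). pose proof (Rabs_pos x3).
  apply Rmult_le_compat; [apply Rmult_le_pos; apply pow_le; auto | apply pow_le; auto | |].
  apply Rmult_le_compat; try (apply pow_le; auto); apply pow_incr; auto.
  apply pow_incr; auto.
Qed.

Lemma eval_abs_le c q1 q2 q3 m p1 p2 p3 : 1 <= c -> 0 < Xg c p1 p2 p3 q1 q2 q3 ->
  Rabs p1 <= energy c p1 p2 p3 -> Rabs p2 <= energy c p1 p2 p3 -> Rabs p3 <= energy c p1 p2 p3 ->
  Rabs q1 <= energy c q1 q2 q3 -> Rabs q2 <= energy c q1 q2 q3 -> Rabs q3 <= energy c q1 q2 q3 ->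
  Rabs (eval c q1 q2 q3 m p1 p2 p3) <= Rabs (co m) *
   (energy c p1 p2 p3 ^ (a1 m + a2 m + a3 m) * energy c q1 q2 q3 ^ (d1 m + d2 m + d3 m + ee m)
    * (energy c p1 p2 p3 ^ mp m * (/ energy c p1 p2 p3) ^ mn m)
    * (rel_g c p1 p2 p3 q1 q2 q3 ^ gp m * (/ rel_g c p1 p2 p3 q1 q2 q3) ^ gn m)
    * (sqrt (mand_s c p1 p2 p3 q1 q2 q3) ^ sp m * (/ sqrt (mand_s c p1 p2 p3 q1 q2 q3)) ^ sn m)).
Proof.
  intros Hc HX H1 H2 H3 H4 H5 H6.
  pose proof (energy_pos c p1 p2 p3 Hc) as HP0.
  pose proof (energy_pos c q1 q2 q3 Hc) as HQ0.
  pose proof (rel_g_pos _ _ _ _ _ _ _ HX) as HG0.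
  pose proof (S_pos c p1 p2 p3 q1 q2 q3 Hc) as HS0.
  unfold eval.
  set (P := energy c p1 p2 p3) in *. set (Q := energy c q1 q2 q3) in *.
  set (G := rel_g c p1 p2 p3 q1 q2 q3) in *. set (S := sqrt (mand_s c p1 p2 p3 q1 q2 q3)) in *.
  assert (Hpos : forall u a b, 0 < u -> 0 < u ^ a * (/ u) ^ b).
  { intros u a b Hu. apply Rmult_lt_0_compat; apply pow_lt; auto. apply Rinv_0_lt_compat; auto. }
  pose proof (Hpos P (mp m) (mn m) HP0) as FP. pose proof (Hpos G (gp m) (gn m) HG0) as FG.
  pose proof (Hpos S (sp m) (sn m) HS0) as FS.
  pose proof (abs_prod3_le p1 p2 p3 P (a1 m) (a2 m) (a3 m) H1 H2 H3) as HXA.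
  assert (HQC : Rabs (q1 ^ d1 m * q2 ^ d2 m * q3 ^ d3 m * Q ^ ee m) <= Q ^ (d1 m + d2 m + d3 m + ee m)).
  { rewrite Rabs_mult, pow_add. apply Rmult_le_compat; try apply Rabs_pos.
    apply abs_prod3_le; auto.
    rewrite <- RPow_abs. apply pow_incr. split. apply Rabs_pos. rewrite Rabs_pos_eq; lra. }
  do 5 rewrite Rabs_mult.
  rewrite (Rabs_pos_eq (P ^ mp m * (/ P) ^ mn m)) by lra.
  rewrite (Rabs_pos_eq (G ^ gp m * (/ G) ^ gn m)) by lra.
  rewrite (Rabs_pos_eq (S ^ sp m * (/ S) ^ sn m)) by lra.
  rewrite <- !(Rmult_assoc (Rabs (co m))).
  repeat apply Rmult_le_compat_r; try lra.
  rewrite !Rmult_assoc. apply Rmult_le_compat_l. apply Rabs_pos.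
  apply Rmult_le_compat; try apply Rabs_pos; auto. all: try lra. all: rewrite <- !Rmult_assoc; auto.
Qed.

Lemma norm_le_energy c x1 x2 x3 : norm3 x1 x2 x3 <= energy c x1 x2 x3.
Proof. unfold norm3, energy, sq3. apply sqrt_le_1_alt. nra. Qed.

Lemma coords c p1 p2 p3 q1 q2 q3 :
  Rabs p1 <= energy c p1 p2 p3 /\ Rabs p2 <= energy c p1 p2 p3 /\ Rabs p3 <= energy c p1 p2 p3 /\
  Rabs q1 <= energy c q1 q2 q3 /\ Rabs q2 <= energy c q1 q2 q3 /\ Rabs q3 <= energy c q1 q2 q3.
Proof.
  pose proof (coord_le p1 p2 p3). pose proof (coord_le q1 q2 q3).
  pose proof (norm_le_energy c p1 p2 p3). pose proof (norm_le_energy c q1 q2 q3).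
  repeat split; lra.
Qed.

Lemma core_facts c (P Q J X : R) : 1 <= c -> c <= Q -> Q <= P -> Q <= c * J -> 1 <= J -> 0 < X ->
  c^2 * P <= 12 * Q * X -> Q * Q <= 16 * J^2 * X /\ Q <= 12 * J * X.
Proof.
  intros Hc H2 H3 H4 H5 H6 H7.
  assert (A1 : c^2 * P * Q <= 12 * Q^2 * X) by nra.
  assert (A2 : Q^2 <= c^2 * J^2) by nra.
  assert (A3 : 12 * Q^2 * X <= 12 * c^2 * J^2 * X) by nra.
  assert (A4 : P * Q <= 12 * J^2 * X) by nra.
  assert (A5 : c^2 <= 12 * X) by nra.
  split; nra.
Qed.

Lemma bound_G_gen c q1 q2 q3 m p1 p2 p3 k n0 (E : R) : 1 <= c ->
  norm3 p1 p2 p3 >= 3 / 2 * energy c q1 q2 q3 -> InvG n0 k m -> (1 <= k)%nat -> 0 <= E ->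
  (forall gp gn y : nat, (Z.of_nat gp + 2 * Z.of_nat y = n0 + Z.of_nat gn)%Z ->
     rel_g c p1 p2 p3 q1 q2 q3 ^ gp * (/ rel_g c p1 p2 p3 q1 q2 q3) ^ gn =
     rel_g c p1 p2 p3 q1 q2 q3 * (/ rel_g c p1 p2 p3 q1 q2 q3) ^ (2 * y) * E) ->
  Rabs (eval c q1 q2 q3 m p1 p2 p3) <= Rabs (co m) * (12 * japan q1 q2 q3) ^ k * E.
Proof.
  intros Hc Hp HI Hk HE HGE.
  destruct (omega c p1 p2 p3 q1 q2 q3 Hc Hp) as (O1 & O2 & O3 & O4 & O5 & O6 & O7 & O8 & O9 & O10 & O11).
  destruct (coords c p1 p2 p3 q1 q2 q3) as (C1 & C2 & C3 & C4 & C5 & C6).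
  pose proof (eval_abs_le c q1 q2 q3 m p1 p2 p3 Hc O6 C1 C2 C3 C4 C5 C6) as Hb.
  destruct HI as (Hsp & Hsn & x & y & I1 & I2 & I3 & I4).
  rewrite Hsp, Hsn, I3, !pow_O in Hb.
  rewrite (HGE _ _ y I4) in Hb.
  pose proof (energy_pos c p1 p2 p3 Hc) as HP0.
  pose proof (energy_pos c q1 q2 q3 Hc) as HQ0.
  pose proof (rel_g_pos _ _ _ _ _ _ _ O6) as HG0.
  assert (HG2 : rel_g c p1 p2 p3 q1 q2 q3 ^ 2 = Xg c p1 p2 p3 q1 q2 q3).
  { unfold rel_g. rewrite pow2_sqrt; [reflexivity | unfold Xg in O6; lra]. }
  unfold Xg in *.
  set (P := energy c p1 p2 p3) in *. set (Q := energy c q1 q2 q3) in *.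
  set (G := rel_g c p1 p2 p3 q1 q2 q3) in *. set (J := japan q1 q2 q3) in *.
  set (X := 2 * (P * Q - dot3 p1 p2 p3 q1 q2 q3 - c ^ 2)) in *.
  assert (EP : P ^ (a1 m + a2 m + a3 m) * (P ^ mp m * (/ P) ^ mn m) = (/ P) ^ x).
  { rewrite <- Rmult_assoc, <- pow_add. rewrite (powpowinv P _ _ 0 x); [simpl; ring | lra | lia]. }
  destruct (core_facts c P Q J X Hc O2 O3 O4 O5 O6 O7) as [K1 K2].
  assert (HG3 : G <= 3 * P) by nra.
  pose proof (core P Q J G x y O1 HQ0 O5 HG0 HG3 ltac:(rewrite HG2; lra) ltac:(rewrite HG2; lra) ltac:(lia)) as Hcore.
  rewrite I1 in Hcore.
  eapply Rle_trans. exact Hb.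
  replace (P ^ (a1 m + a2 m + a3 m) * Q ^ y * (P ^ mp m * (/ P) ^ mn m) * (G * (/ G) ^ (2 * y) * E) * (1 * 1))
    with (((/ P) ^ x * Q ^ y * G * (/ G) ^ (2 * y)) * E) by (rewrite <- EP; ring).
  rewrite (Rmult_assoc (Rabs (co m)) ((12 * J) ^ k) E). apply Rmult_le_compat_l. apply Rabs_pos.
  apply Rmult_le_compat_r; auto.
Qed.

Lemma bound_S_gen c q1 q2 q3 m p1 p2 p3 k n0 (E : R) : 1 <= c ->
  norm3 p1 p2 p3 >= 3 / 2 * energy c q1 q2 q3 -> InvS n0 k m -> (1 <= k)%nat -> 0 <= E ->
  (forall gp gn y : nat, (Z.of_nat gp + 2 * Z.of_nat y = n0 + Z.of_nat gn)%Z ->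
     sqrt (mand_s c p1 p2 p3 q1 q2 q3) ^ gp * (/ sqrt (mand_s c p1 p2 p3 q1 q2 q3)) ^ gn =
     sqrt (mand_s c p1 p2 p3 q1 q2 q3) * (/ sqrt (mand_s c p1 p2 p3 q1 q2 q3)) ^ (2 * y) * E) ->
  Rabs (eval c q1 q2 q3 m p1 p2 p3) <= Rabs (co m) * (12 * japan q1 q2 q3) ^ k * E.
Proof.
  intros Hc Hp HI Hk HE HGE.
  destruct (omega c p1 p2 p3 q1 q2 q3 Hc Hp) as (O1 & O2 & O3 & O4 & O5 & O6 & O7 & O8 & O9 & O10 & O11).
  destruct (coords c p1 p2 p3 q1 q2 q3) as (C1 & C2 & C3 & C4 & C5 & C6).
  pose proof (eval_abs_le c q1 q2 q3 m p1 p2 p3 Hc O6 C1 C2 C3 C4 C5 C6) as Hb.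
  destruct HI as (Hsp & Hsn & x & y & I1 & I2 & I3 & I4).
  rewrite Hsp, Hsn, I3, !pow_O in Hb.
  rewrite (HGE _ _ y I4) in Hb.
  pose proof (energy_pos c p1 p2 p3 Hc) as HP0.
  pose proof (energy_pos c q1 q2 q3 Hc) as HQ0.
  pose proof (S_pos c p1 p2 p3 q1 q2 q3 Hc) as HG0.
  assert (HG2 : sqrt (mand_s c p1 p2 p3 q1 q2 q3) ^ 2 = mand_s c p1 p2 p3 q1 q2 q3).
  { rewrite pow2_sqrt; [reflexivity | lra]. }
  set (P := energy c p1 p2 p3) in *. set (Q := energy c q1 q2 q3) in *.
  set (G := sqrt (mand_s c p1 p2 p3 q1 q2 q3)) in *. set (J := japan q1 q2 q3) in *.
  set (X := mand_s c p1 p2 p3 q1 q2 q3) in *.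
  assert (EP : P ^ (a1 m + a2 m + a3 m) * (P ^ mp m * (/ P) ^ mn m) = (/ P) ^ x).
  { rewrite <- Rmult_assoc, <- pow_add. rewrite (powpowinv P _ _ 0 x); [simpl; ring | lra | lia]. }
  assert (K1 : Q * Q <= 16 * J ^ 2 * X) by nra.
  assert (K2 : Q <= 12 * J * X) by nra.
  assert (HG3 : G <= 3 * P) by nra.
  pose proof (core P Q J G x y O1 HQ0 O5 HG0 HG3 ltac:(rewrite HG2; lra) ltac:(rewrite HG2; lra) ltac:(lia)) as Hcore.
  rewrite I1 in Hcore.
  eapply Rle_trans. exact Hb.
  replace (P ^ (a1 m + a2 m + a3 m) * Q ^ y * (P ^ mp m * (/ P) ^ mn m) * (1 * 1) * (G * (/ G) ^ (2 * y) * E))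
    with (((/ P) ^ x * Q ^ y * G * (/ G) ^ (2 * y)) * E) by (rewrite <- EP; ring).
  rewrite (Rmult_assoc (Rabs (co m)) ((12 * J) ^ k) E). apply Rmult_le_compat_l. apply Rabs_pos.
  apply Rmult_le_compat_r; auto.
Qed.

Lemma E_one u gp gn y : u <> 0 -> (Z.of_nat gp + 2 * Z.of_nat y = 1 + Z.of_nat gn)%Z ->
  u ^ gp * (/ u) ^ gn = u * (/ u) ^ (2 * y) * 1.
Proof. intros Hu H. rewrite (powpowinv u gp gn 1 (2 * y)); [simpl; ring | auto | lia]. Qed.
Lemma E_m1 u gp gn y : u <> 0 -> (Z.of_nat gp + 2 * Z.of_nat y = -1 + Z.of_nat gn)%Z ->
  u ^ gp * (/ u) ^ gn = u * (/ u) ^ (2 * y) * / u ^ 2.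
Proof.
  intros Hu H. rewrite (powpowinv u gp gn 0 (S (2 * y))); [|auto|lia].
  simpl. field. auto.
Qed.

Definition sumco (L : list mono) : R := fold_right (fun m acc => Rabs (co m) + acc) 0 L.
Lemma sumco_nn L : 0 <= sumco L.
Proof. induction L; simpl. lra. pose proof (Rabs_pos (co a)). lra. Qed.

Lemma evalL_bound (Inv : mono -> Prop) c q1 q2 q3 L p1 p2 p3 (B : R) :
  List.Forall Inv L -> (forall m, Inv m -> Rabs (eval c q1 q2 q3 m p1 p2 p3) <= Rabs (co m) * B) ->
  Rabs (evalL c q1 q2 q3 L p1 p2 p3) <= sumco L * B.
Proof.
  intros HF Hm. induction HF as [|m L Hm0 HL IH].
  - unfold evalL; simpl. rewrite Rabs_R0. lra.
  - rewrite evalL_cons. simpl sumco. eapply Rle_trans. apply Rabs_triang.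
    pose proof (Hm m Hm0). lra.
Qed.

Lemma DB_inv (Inv : nat -> mono -> Prop)
  (step : forall i k m, Inv k m -> List.Forall (Inv (S k)) (Dm i m)) b1 b2 b3 L :
  List.Forall (Inv 0%nat) L -> List.Forall (Inv (b1 + b2 + b3)%nat) (DB b1 b2 b3 L).
Proof.
  intros H. replace (b1 + b2 + b3)%nat with (b1 + (b2 + (b3 + 0)))%nat by lia.
  unfold DB. apply iter_inv; auto. apply iter_inv; auto. apply iter_inv; auto.
Qed.

Definition m0 gp gn sp sn := Mono 1 0 0 0 0 0 0 0 0 0 gp gn sp sn.
Definition LG b1 b2 b3 := DB b1 b2 b3 (m0 1 0 0 0 :: nil).
Definition LGi b1 b2 b3 := DB b1 b2 b3 (m0 0 1 0 0 :: nil).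
Definition LS b1 b2 b3 := DB b1 b2 b3 (m0 0 0 1 0 :: nil).
Definition LSi b1 b2 b3 := DB b1 b2 b3 (m0 0 0 0 1 :: nil).

Theorem lemmaA4 (b1 b2 b3 : nat) (hb : (0 < b1 + b2 + b3)%nat) :
  exists C : R, 0 < C /\
  forall c p1 p2 p3 q1 q2 q3 : R,
    1 <= c ->
    norm3 p1 p2 p3 >= 3 / 2 * energy c q1 q2 q3 ->
    Rabs (dmulti b1 b2 b3 (fun x1 x2 x3 => rel_g c x1 x2 x3 q1 q2 q3) p1 p2 p3)
      <= C * japan q1 q2 q3 ^ (b1 + b2 + b3)
    /\
    Rabs (dmulti b1 b2 b3 (fun x1 x2 x3 => / rel_g c x1 x2 x3 q1 q2 q3) p1 p2 p3)
      <= C * japan q1 q2 q3 ^ (b1 + b2 + b3) / rel_g c p1 p2 p3 q1 q2 q3 ^ 2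
    /\
    Rabs (dmulti b1 b2 b3 (fun x1 x2 x3 => sqrt (mand_s c x1 x2 x3 q1 q2 q3)) p1 p2 p3)
      <= C * japan q1 q2 q3 ^ (b1 + b2 + b3)
    /\
    Rabs (dmulti b1 b2 b3 (fun x1 x2 x3 => / sqrt (mand_s c x1 x2 x3 q1 q2 q3)) p1 p2 p3)
      <= C * japan q1 q2 q3 ^ (b1 + b2 + b3) / rel_g c p1 p2 p3 q1 q2 q3 ^ 2.
Proof.
  set (k := (b1 + b2 + b3)%nat).
  set (s := sumco (LG b1 b2 b3) + sumco (LGi b1 b2 b3) + sumco (LS b1 b2 b3) + sumco (LSi b1 b2 b3)).
  assert (Hs : 0 <= s).
  { unfold s. pose proof (sumco_nn (LG b1 b2 b3)). pose proof (sumco_nn (LGi b1 b2 b3)).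
    pose proof (sumco_nn (LS b1 b2 b3)). pose proof (sumco_nn (LSi b1 b2 b3)). lra. }
  assert (H12 : 0 < 12 ^ k) by (apply pow_lt; lra).
  exists (1 + 12 ^ k * s). split. { nra. }
  intros c p1 p2 p3 q1 q2 q3 Hc Hp.
  destruct (omega c p1 p2 p3 q1 q2 q3 Hc Hp) as (O1 & O2 & O3 & O4 & O5 & O6 & O7 & O8 & O9 & O10 & O11).
  pose proof (rel_g_pos _ _ _ _ _ _ _ O6) as HG0.
  pose proof (S_pos c p1 p2 p3 q1 q2 q3 Hc) as HS0.
  assert (HG2 : rel_g c p1 p2 p3 q1 q2 q3 ^ 2 = Xg c p1 p2 p3 q1 q2 q3).
  { unfold rel_g. rewrite pow2_sqrt; [reflexivity | unfold Xg in O6; lra]. }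
  assert (HS2 : sqrt (mand_s c p1 p2 p3 q1 q2 q3) ^ 2 = mand_s c p1 p2 p3 q1 q2 q3).
  { rewrite pow2_sqrt; [reflexivity | lra]. }
  assert (HJk : 0 <= japan q1 q2 q3 ^ k) by (apply pow_le; lra).
  assert (Hpk : (12 * japan q1 q2 q3) ^ k = 12 ^ k * japan q1 q2 q3 ^ k) by apply Rpow_mult_distr.
  assert (Hk1 : (1 <= k)%nat) by (unfold k; lia).
  assert (Hfin : forall L, 0 <= sumco L -> sumco L <= s ->
     sumco L * (12 * japan q1 q2 q3) ^ k <= (1 + 12 ^ k * s) * japan q1 q2 q3 ^ k).
  { intros L HL1 HL2. rewrite Hpk.
    apply Rle_trans with ((12 ^ k * s) * japan q1 q2 q3 ^ k).
    { replace (sumco L * (12 ^ k * japan q1 q2 q3 ^ k)) with ((12 ^ k * sumco L) * japan q1 q2 q3 ^ k) by ring.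
      apply Rmult_le_compat_r; [auto|]. apply Rmult_le_compat_l; lra. }
    apply Rmult_le_compat_r; lra. }
  assert (HiG : 0 < / rel_g c p1 p2 p3 q1 q2 q3 ^ 2) by (apply Rinv_0_lt_compat; apply pow_lt; lra).
  assert (HiSG : / sqrt (mand_s c p1 p2 p3 q1 q2 q3) ^ 2 <= / rel_g c p1 p2 p3 q1 q2 q3 ^ 2).
  { apply Rinv_le_contravar. apply pow_lt; lra. lra. }
  assert (HiS : 0 < / sqrt (mand_s c p1 p2 p3 q1 q2 q3) ^ 2) by (apply Rinv_0_lt_compat; apply pow_lt; lra).
  pose proof (sumco_nn (LG b1 b2 b3)). pose proof (sumco_nn (LGi b1 b2 b3)).
  pose proof (sumco_nn (LS b1 b2 b3)). pose proof (sumco_nn (LSi b1 b2 b3)).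
  repeat split.
  - rewrite (dmulti_eval c q1 q2 q3 (m0 1 0 0 0 :: nil)); auto.
    2: { intros; unfold evalL, eval; simpl; ring. }
    fold (LG b1 b2 b3).
    eapply Rle_trans.
    { apply (evalL_bound (InvG 1 k)).
      - apply DB_inv. { intros i0 k0 mm; apply InvG_step. } constructor; [|constructor].
        unfold InvG; simpl. split; [reflexivity|split;[reflexivity|]]. exists 0%nat, 0%nat. repeat split; lia.
      - intros m Hm. rewrite <- (Rmult_1_r (Rabs (co m) * _)).
        apply (bound_G_gen c q1 q2 q3 m p1 p2 p3 k 1); auto. lra.
        intros; apply E_one; auto; lra. }
    apply Hfin; auto. unfold s; lra.
  - rewrite (dmulti_eval c q1 q2 q3 (m0 0 1 0 0 :: nil)); auto.
    2: { intros; unfold evalL, eval; simpl; ring. }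
    fold (LGi b1 b2 b3).
    eapply Rle_trans.
    { apply (evalL_bound (InvG (-1) k) c q1 q2 q3 _ p1 p2 p3 ((12 * japan q1 q2 q3) ^ k * / rel_g c p1 p2 p3 q1 q2 q3 ^ 2)).
      - apply DB_inv. { intros i0 k0 mm; apply InvG_step. } constructor; [|constructor].
        unfold InvG; simpl. split; [reflexivity|split;[reflexivity|]]. exists 0%nat, 0%nat. repeat split; lia.
      - intros m Hm. rewrite <- Rmult_assoc.
        apply (bound_G_gen c q1 q2 q3 m p1 p2 p3 k (-1)); auto. lra.
        intros; apply E_m1; auto; lra. }
    unfold Rdiv. rewrite <- Rmult_assoc. apply Rmult_le_compat_r. lra.
    apply Hfin; auto. unfold s; lra.
  - rewrite (dmulti_eval c q1 q2 q3 (m0 0 0 1 0 :: nil)); auto.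
    2: { intros; unfold evalL, eval; simpl; ring. }
    fold (LS b1 b2 b3).
    eapply Rle_trans.
    { apply (evalL_bound (InvS 1 k)).
      - apply DB_inv. { intros i0 k0 mm; apply InvS_step. } constructor; [|constructor].
        unfold InvS; simpl. split; [reflexivity|split;[reflexivity|]]. exists 0%nat, 0%nat. repeat split; lia.
      - intros m Hm. rewrite <- (Rmult_1_r (Rabs (co m) * _)).
        apply (bound_S_gen c q1 q2 q3 m p1 p2 p3 k 1); auto. lra.
        intros; apply E_one; auto; lra. }
    apply Hfin; auto. unfold s; lra.
  - rewrite (dmulti_eval c q1 q2 q3 (m0 0 0 0 1 :: nil)); auto.
    2: { intros; unfold evalL, eval; simpl; ring. }
    fold (LSi b1 b2 b3).
    eapply Rle_trans.
    { apply (evalL_bound (InvS (-1) k) c q1 q2 q3 _ p1 p2 p3 ((12 * japan q1 q2 q3) ^ k * / sqrt (mand_s c p1 p2 p3 q1 q2 q3) ^ 2)).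
      - apply DB_inv. { intros i0 k0 mm; apply InvS_step. } constructor; [|constructor].
        unfold InvS; simpl. split; [reflexivity|split;[reflexivity|]]. exists 0%nat, 0%nat. repeat split; lia.
      - intros m Hm. rewrite <- Rmult_assoc.
        apply (bound_S_gen c q1 q2 q3 m p1 p2 p3 k (-1)); auto. lra.
        intros; apply E_m1; auto; lra. }
    unfold Rdiv.
    apply Rle_trans with (sumco (LSi b1 b2 b3) * ((12 * japan q1 q2 q3) ^ k * / rel_g c p1 p2 p3 q1 q2 q3 ^ 2)).
    { apply Rmult_le_compat_l. auto.
      apply Rmult_le_compat_l. apply pow_le; lra. auto. }
    rewrite <- Rmult_assoc. apply Rmult_le_compat_r. lra.
    apply Hfin; auto. unfold s; lra.
Qed.
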